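(* Let $\alpha\in\mathbb{N}$ and let $Q_n(f)=\sum_{j=1}^n w_j f(\xi_j)$ be a quadrature rule with distinct points $\xi_1<\dots<\xi_n$ in $\mathbb{R}$ and arbitrary weights $w_j\in\mathbb{R}$. Let $\delta=\delta(n)\in(0,1]$ be such that no quadrature point $\xi_j$ lies in $(0,\delta)$. Then \[ e^{\mathrm{wor}}(Q_n,\mathscr{H}_\alpha)\geq C_\alpha\delta^{\alpha+1/2}, \] where $C_\alpha>0$ is independent of $\delta$. In particular, if $Q_n$ has no quadrature point in $(0,n^{-r})$ for some $r>0$, then $e^{\mathrm{wor}}(Q_n,\mathscr{H}_\alpha)\geq C_\alpha n^{-r\alpha-r/2}$.
   Context: Let $\rho(x)=\frac{1}{\sqrt{2\pi}}\mathrm{e}^{-x^2/2}$ and $L^2_\rho$ the space of (equivalence classes of) measurable $f:\mathbb{R}\to\mathbb{R}$ with $\|f\|_{L^2_\rho}^2=\int_\mathbb{R}|f(x)|^2\rho(x)\,\mathrm{d}x<\infty$. For $\alpha\in\mathbb{N}$, the weighted Sobolev space $\mathscr{H}_\alpha$ is the set of $f\in L^2_\rho$ having weak derivatives $f^{(\tau)}\in L^2_\rho$ for $\tau=1,\dots,\alpha$, with norm $\|f\|_\alpha=(\sum_{\tau=0}^\alpha\|f^{(\tau)}\|_{L^2_\rho}^2)^{1/2}$; elements are identified with their continuous representatives. Let $I(f)=\int_\mathbb{R}f(x)\rho(x)\,\mathrm{d}x$. For a quadrature rule $Q_n$, the worst-case error is $e^{\mathrm{wor}}(Q_n,\mathscr{H}_\alpha)=\sup_{0\neq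 f\in\mathscr{H}_\alpha}|I(f)-Q_n(f)|/\|f\|_\alpha$. *)

(* Defs.v *)
From HB Require Import structures.
From mathcomp Require Import all_boot all_order all_algebra.
From mathcomp Require Import all_classical all_reals all_analysis.
Set Implicit Arguments. Unset Strict Implicit. Unset Printing Implicit Defensive.
Import Order.TTheory GRing.Theory Num.Theory.
Import numFieldNormedType.Exports.
Local Open Scope classical_set_scope.
Local Open Scope ring_scope.

Section Defs.
Variable R : realType.
Notation leb := (@lebesgue_measure R).

Definition rho (x : R) : R := expR (- (x ^+ 2) / 2) / Num.sqrt (2 * pi).

Definition inL2rho (f : R -> R) : Prop :=
  measurable_fun setT f /\
  (\int[leb]_x (((f x) ^+ 2 * rho x)%:E) < +oo)%E.

Definition sqnormL2rho (f : R -> R) : R :=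
  Rintegral leb setT (fun x => (f x) ^+ 2 * rho x).

Definition test_fun (phi : R -> R) : Prop :=
  (forall (k : nat) (x : R), derivable (derive1n k phi) x 1) /\
  (exists M : R, forall x, M < `|x| -> phi x = 0).

Definition weak_deriv (h g : R -> R) : Prop :=
  forall phi, test_fun phi ->
    Rintegral leb setT (fun x => h x * derive1 phi x) =
    - Rintegral leb setT (fun x => g x * phi x).

(* f (continuous representative) belongs to H_alpha, with g tau = f^(tau),
   g 0 = f, each g tau in L^2_rho, g (tau+1) weak derivative of g tau *)
Definition in_H (alpha : nat) (f : R -> R) (g : nat -> R -> R) : Prop :=
  continuous f /\ g 0%N = f /\
  (forall tau, (tau <= alpha)%N -> inL2rho (g tau)) /\
  (forall tau, (tau < alpha)%N -> weak_deriv (g tau) (g tau.+1)).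

Definition H_norm (alpha : nat) (g : nat -> R -> R) : R :=
  Num.sqrt (\sum_(0 <= tau < alpha.+1) sqnormL2rho (g tau)).

Definition Igauss (f : R -> R) : R := Rintegral leb setT (fun x => f x * rho x).

Definition quad (n : nat) (w xi : 'I_n -> R) (f : R -> R) : R :=
  \sum_(j < n) w j * f (xi j).

Definition ewor (alpha n : nat) (w xi : 'I_n -> R) : \bar R :=
  ereal_sup [set e : \bar R | exists (f : R -> R) (g : nat -> R -> R),
     [/\ in_H alpha f g, f <> (fun _ => 0) &
          e = ((`|Igauss f - quad w xi f| / H_norm alpha g)%:E)]].
End Defs.

(* Main.v *)
Require Import Defs.
From HB Require Import structures.
From mathcomp Require Import all_boot all_order all_algebra.
From mathcomp Require Import all_classical all_reals all_analysis.
From mathcomp Require Import ring lra.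
Import Order.TTheory GRing.Theory Num.Theory.
Local Open Scope ring_scope.

Module MA.
Set Implicit Arguments. Unset Strict Implicit.
Import Order.TTheory GRing.Theory Num.Theory.
Import numFieldNormedType.Exports.
Local Open Scope classical_set_scope.
Local Open Scope ring_scope.

Section Poly.
Variable R : realType.

Lemma dvd_deriv (q : {poly R}) c k :
  (exists r, q = r * ('X - c%:P)^+k.+1) -> exists r, q^`() = r * ('X - c%:P)^+k.
Proof.
case=> r ->; exists (r^`() * ('X - c%:P) + r *+ k.+1).
rewrite derivM deriv_exp derivXsubC mul1r /= exprS.
idtac.
by rewrite [RHS]mulrDl mulrnAl mulrnAr mulrA.
Qed.

Definition Bp (m : nat) : {poly R} := ('X * (1 - 'X))^+m.

Lemma Bp_fact m c : c = 0 \/ c = 1 -> exists r, Bp m = r * ('X - c%:P)^+m.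
Proof.
case=> ->.
  by exists ((1 - 'X)^+m); rewrite /Bp subr0 exprMn mulrC.
exists ((- 'X)^+m); rewrite /Bp -exprMn; congr (_ ^+ _); rewrite polyC1; ring.
Qed.

Lemma Bp_derivn_root m t c : (t < m)%N -> c = 0 \/ c = 1 ->
  (Bp m)^`(t).[c] = 0.
Proof.
move=> tm hc.
have H : forall s, (s <= m)%N -> exists r, (Bp m)^`(s) = r * ('X - c%:P)^+(m - s).
  elim=> [|s IH] sm; first by rewrite subn0 derivn0; exact: Bp_fact.
  have [r hr] := IH (ltnW sm).
  by rewrite derivnS hr; apply: dvd_deriv; exists r; rewrite subnSK.
have [r ->] := H t (ltnW tm).
rewrite hornerM horner_exp hornerXsubC subrr expr0n /=.
have -> : (m - t == 0)%N = false by apply/negbTE; rewrite subn_eq0 -ltnNge.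
by rewrite mulr0.
Qed.
End Poly.

End MA.
Import MA.

Module MB.
Set Implicit Arguments. Unset Strict Implicit.
Import Order.TTheory GRing.Theory Num.Theory.
Import numFieldNormedType.Exports.
Local Open Scope classical_set_scope.
Local Open Scope ring_scope.

Section P.
Variable R : realType.

Definition Pt (m : nat) (d : R) (t : nat) : {poly R} :=
  (d^-1)^+t *: ((Bp R m)^`(t) \Po (d^-1 *: 'X)).

Lemma Pt_deriv m d t : (Pt m d t)^`() = Pt m d t.+1.
Proof.
rewrite /Pt derivZ deriv_comp derivZ derivX alg_polyC derivnS.
by rewrite mulrC mul_polyC scalerA exprSr.
Qed.

Lemma Pt_horner m d t x : (Pt m d t).[x] = (d^-1)^+t * ((Bp R m)^`(t)).[d^-1 * x].
Proof. by rewrite /Pt hornerZ horner_comp hornerZ hornerX. Qed.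

Lemma Pt_root0 m d t : (t < m)%N -> (Pt m d t).[0] = 0.
Proof. by move=> tm; rewrite Pt_horner mulr0 Bp_derivn_root ?mulr0//; left. Qed.

Lemma Pt_rootd m d t : d != 0 -> (t < m)%N -> (Pt m d t).[d] = 0.
Proof. by move=> d0 tm; rewrite Pt_horner mulVf// Bp_derivn_root ?mulr0//; right. Qed.

Definition Kp (p : {poly R}) : R := \sum_(i < size p) `|p`_i|.

Lemma Kp_ge0 p : 0 <= Kp p.
Proof. by apply: sumr_ge0 => i _. Qed.

Lemma Kp_bound p y : `|y| <= 1 -> `|p.[y]| <= Kp p.
Proof.
move=> y1; rewrite horner_coef; apply: (le_trans (ler_norm_sum _ _ _)).
apply: ler_sum => i _; rewrite normrM -[X in _ <= X]mulr1 ler_wpM2l//.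
by rewrite normrX exprn_ile1.
Qed.

Definition cl (d x : R) : R := Num.min (Num.max x 0) d.

Lemma cl_id d x : 0 <= x <= d -> cl d x = x.
Proof.
case/andP=> x0 xd; rewrite /cl.
have -> : Num.max x 0 = x by apply/max_idPl.
by apply/min_idPl.
Qed.

Lemma cl_range d x : 0 <= d -> 0 <= cl d x <= d.
Proof.
move=> d0; rewrite /cl; apply/andP; split.
  by rewrite le_min d0 le_max lexx orbT.
by rewrite ge_min lexx orbT.
Qed.

Lemma cl_out d x : 0 <= d -> ~ (0 <= x <= d) -> cl d x = 0 \/ cl d x = d.
Proof.
move=> d0 hx; rewrite /cl.
have [x0|x0] := leP 0 x.
  right.
  by apply/min_idPr; rewrite leNgt; apply/negP => xd; apply: hx; rewrite x0 ltW.
by left; apply/min_idPl.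
Qed.

Lemma cl_continuous d : continuous (cl d).
Proof.
rewrite /cl.
have -> : (fun x => Num.min (Num.max x 0) d) = (fun x => x) \max (cst 0) \min (cst d).
  by [].
apply: min_fun_continuous; last exact: cst_continuous.
apply: max_fun_continuous; last exact: cst_continuous.
by move=> x; exact: cvg_id.
Qed.

End P.

End MB.
Import MB.

Module MC.
Set Implicit Arguments. Unset Strict Implicit.
Import Order.TTheory GRing.Theory Num.Theory.
Import numFieldNormedType.Exports.
Local Open Scope classical_set_scope.
Local Open Scope ring_scope.

Section Int.
Variable R : realType.
Notation mu := (@lebesgue_measure R).

Lemma itv_meas (a b : R) : a <= b -> mu `[a, b] = (b - a)%:E.
Proof.
move=> ab; rewrite lebesgue_measure_itv /=.
case: ltP => [|]; first by rewrite -EFinB.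
rewrite lee_fin => ba; have -> : b = a by apply/eqP; rewrite eq_le ab ba.
by rewrite subrr.
Qed.

Lemma int_supp (h : R -> R) (d : R) : 0 < d -> continuous h ->
  (forall x, ~ (0 <= x <= d) -> h x = 0) ->
  mu.-integrable setT (EFin \o h) /\
  Rintegral mu setT h = Rintegral mu `[0, d] h.
Proof.
move=> d0 ch hout.
have hD : forall x, (h \_ `[0, d]) x = h x.
  move=> x; rewrite patchE; case: ifPn => // /negP xD.
  by rewrite hout// => hx; apply: xD; rewrite inE /= in_itv /=.
split; last first.
  by rewrite [RHS]Rintegral_mkcond; apply: eq_Rintegral => x _; rewrite hD.
have ih : mu.-integrable `[0, d] (EFin \o h).
  apply: continuous_compact_integrable; first exact: segment_compact.
  exact: continuous_subspaceT.
have := (integrable_restrict mu (measurable_itv `[0, d]) measurableT (EFin \o h)).1.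
rewrite setTI => /(_ ih); apply: eq_integrable => // x _.
by rewrite restrict_EFin /= hD.
Qed.

Lemma int_le_const (h : R -> R) (d M : R) : 0 < d -> continuous h ->
  (forall x, 0 <= x <= d -> h x <= M) -> Rintegral mu `[0, d] h <= M * d.
Proof.
move=> d0 ch hM.
have -> : M * d = Rintegral mu `[0, d] (fun _ => M).
  have H := itv_meas (ltW d0); rewrite subr0 in H.
  rewrite Rintegral_cst//; congr (_ * _).
  by rewrite -[LHS]/(fine (d%:E)) -H.
apply: le_Rintegral => //.
- apply: continuous_compact_integrable; first exact: segment_compact.
  exact: continuous_subspaceT.
- apply: continuous_compact_integrable; first exact: segment_compact.
  by apply: continuous_subspaceT => x; exact: cvg_cst.
all: try by move=> x; rewrite /= in_itv /=; exact: hM.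
Qed.

Lemma int_ge_const (h : R -> R) (d a b c : R) : 0 < d -> continuous h -> 0 <= c ->
  0 <= a -> a <= b -> b <= d ->
  (forall x, 0 <= x <= d -> 0 <= h x) ->
  (forall x, a <= x <= b -> c <= h x) -> c * (b - a) <= Rintegral mu `[0, d] h.
Proof.
move=> d0 ch c0 a0 ab bd h0 hc.
have mh := measurable_realfun.continuous_measurable_fun ch.
have ih : mu.-integrable `[0, d] (EFin \o h).
  apply: continuous_compact_integrable; first exact: segment_compact.
  exact: continuous_subspaceT.
rewrite /Rintegral -lee_fin fineK; last exact: integrable_fin_num.
apply: (@le_trans _ _ (\int[mu]_(x in `[a, b]) (h x)%:E)%E).
  rewrite EFinM -(itv_meas ab) -integral_cst//.
  apply: ge0_le_integral => //.
  - by apply/measurable_realfun.measurable_EFinP; exact: (measurable_funTS mh).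
refine (ge0_subset_integral mu _ _ _ _ _) => //.
- by apply/measurable_realfun.measurable_EFinP; exact: (measurable_funTS mh).
- move=> x; rewrite /= !in_itv /= => /andP[ax xb].
  by rewrite (le_trans a0 ax) (le_trans xb bd).
Qed.

End Int.

End MC.
Import MC.

Module MD.
Set Implicit Arguments. Unset Strict Implicit.
Import Order.TTheory GRing.Theory Num.Theory.
Import numFieldNormedType.Exports.
Local Open Scope classical_set_scope.
Local Open Scope ring_scope.

Section G.
Variable R : realType.
Notation mu := (@lebesgue_measure R).
Variable alpha : nat.
Let m := alpha.+1.
Variable d : R.
Hypothesis d0 : 0 < d.

Definition gg (t : nat) (x : R) : R := (Pt m d t).[cl d x].

Lemma gg_cont t : continuous (gg t).
Proof.
move=> x; apply: (@continuous_comp _ _ _ (cl d) (horner (Pt m d t))).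
  exact: cl_continuous.
exact: continuous_horner.
Qed.

Lemma gg_out t x : (t < m)%N -> ~ (0 <= x <= d) -> gg t x = 0.
Proof.
move=> tm hx; rewrite /gg; case: (cl_out (ltW d0) hx) => ->.
  exact: Pt_root0.
by apply: Pt_rootd => //; rewrite gt_eqF.
Qed.

Lemma gg_in t x : 0 <= x <= d -> gg t x = (Pt m d t).[x].
Proof. by move=> hx; rewrite /gg cl_id. Qed.

Lemma gg_weak t : (t < alpha)%N -> weak_deriv (gg t) (gg t.+1).
Proof.
move=> ta phi [dphi _].
have tm : (t < m)%N by rewrite /m ltnS ltnW.
have tm' : (t.+1 < m)%N by rewrite /m ltnS.
have dp x : derivable phi x 1 by have := dphi 0%N x; rewrite derive1n0.
have dp' x : derivable (derive1 phi) x 1 by have := dphi 1%N x; rewrite derive1n1.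
have cp : continuous phi.
  by move=> x; apply/differentiable_continuous/derivable1_diffP.
have cp' : continuous (derive1 phi).
  by move=> x; apply/differentiable_continuous/derivable1_diffP.
have cF1 : continuous (fun x => gg t x * (derive1 phi) x).
  by move=> x; apply: cvgM; [exact: gg_cont|exact: cp'].
have cF2 : continuous (fun x => gg t.+1 x * phi x).
  by move=> x; apply: cvgM; [exact: gg_cont|exact: cp].
rewrite (int_supp d0 cF1 _).2; last by move=> x hx; rewrite gg_out// mul0r.
rewrite (int_supp d0 cF2 _).2; last by move=> x hx; rewrite gg_out// mul0r.
pose f x := (Pt m d t.+1).[x] * phi x + (Pt m d t).[x] * (derive1 phi) x.
have cf : continuous f.
  move=> x; apply: cvgD; apply: cvgM.
  - exact: continuous_horner.
  - exact: cp.
  - exact: continuous_horner.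
  - exact: cp'.
have du (x : R) : is_derive x (1 : R) (horner (Pt m d t) * phi) (f x).
  have H := is_deriveM (is_derive_poly (Pt m d t) x) (derivableP (dp x)).
  rewrite Pt_deriv -derive1E in H.
  suff -> : f x = (Pt m d t).[x] *: (derive1 phi) x + phi x *: (Pt m d t.+1).[x] by [].
  by rewrite /f addrC; congr (_ + _); rewrite mulrC.
have cu : continuous (horner (Pt m d t) * phi).
  by move=> x; apply: cvgM; [exact: continuous_horner|exact: cp].
have FTC := @continuous_FTC2 R f (horner (Pt m d t) * phi) 0 d d0
  (continuous_subspaceT cf).
have I0 : Rintegral mu `[0, d] f = 0.
  rewrite /Rintegral FTC.
  - rewrite /=; change ((Pt m d t).[d] * phi d - (Pt m d t).[0] * phi 0 = 0).
    by rewrite Pt_rootd ?gt_eqF// Pt_root0// !mul0r subrr.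
  - split.
    + by move=> x _; case: (du x).
    + exact: cvg_at_right_filter (cu 0).
    + exact: cvg_at_left_filter (cu d).
  - by move=> x _; rewrite derive1E; exact: derive_val.
have icc (h : R -> R) : continuous h -> mu.-integrable `[0, d] (EFin \o h).
  move=> ch; apply: continuous_compact_integrable; first exact: segment_compact.
  exact: continuous_subspaceT.
rewrite RintegralD in I0 => //; last 2 first.
- apply: icc => x; apply: cvgM; [exact: continuous_horner|exact: cp].
- apply: icc => x; apply: cvgM; [exact: continuous_horner|exact: cp'].
have -> : Rintegral mu `[0, d] (fun x => gg t x * (derive1 phi) x) =
          Rintegral mu `[0, d] (fun x => (Pt m d t).[x] * (derive1 phi) x).
  by apply: eq_Rintegral => x; rewrite inE /= in_itv /= => hx; rewrite gg_in.
have -> : Rintegral mu `[0, d] (fun x => gg t.+1 x * phi x) =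
          Rintegral mu `[0, d] (fun x => (Pt m d t.+1).[x] * phi x).
  by apply: eq_Rintegral => x; rewrite inE /= in_itv /= => hx; rewrite gg_in.
by apply/eqP; rewrite -addr_eq0 addrC I0.
Qed.

End G.

End MD.
Import MD.

Module ME.
Set Implicit Arguments. Unset Strict Implicit.
Import Order.TTheory GRing.Theory Num.Theory.
Import numFieldNormedType.Exports.
Local Open Scope classical_set_scope.
Local Open Scope ring_scope.

Section H.
Variable R : realType.

Lemma sq2pi_gt0 : 0 < Num.sqrt (2 * pi) :> R.
Proof. by rewrite sqrtr_gt0 mulr_gt0 ?pi_gt0. Qed.

Lemma rho_gt0 (x : R) : 0 < rho x.
Proof. by rewrite /rho divr_gt0 ?expR_gt0 ?sq2pi_gt0. Qed.

Lemma rho_le0 (x : R) : rho x <= rho 0.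
Proof.
rewrite /rho ler_pM2r ?invr_gt0 ?sq2pi_gt0// ler_expR expr0n /= oppr0 mul0r.
by rewrite mulNr oppr_le0 mulr_ge0 ?sqr_ge0 ?invr_ge0.
Qed.

Lemma rho_ge1 (x : R) : `|x| <= 1 -> rho 1 <= rho x.
Proof.
move=> x1; rewrite /rho ler_pM2r ?invr_gt0 ?sq2pi_gt0// ler_expR expr1n.
rewrite !mulNr lerN2 ler_wpM2r ?invr_ge0//.
by rewrite -real_normK ?num_real// exprn_ile1.
Qed.

Lemma rho_cont : continuous (@rho R).
Proof.
move=> x; rewrite /rho; apply: cvgM; last exact: cvg_cst.
apply: continuous_comp; last exact: continuous_expR.
apply: cvgM; last exact: cvg_cst.
apply: cvgN; exact: exprn_continuous.
Qed.

Lemma Bp_horner m (y : R) : (Bp R m).[y] = (y * (1 - y)) ^+ m.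
Proof. by rewrite /Bp horner_exp !hornerE. Qed.

End H.

Section GG.
Variable R : realType.
Variable alpha : nat.
Variable d : R.
Hypothesis d0 : 0 < d.

Definition Kc : R := \sum_(t < alpha.+1) Kp ((Bp R alpha.+1)^`(t)) + 1.

Lemma Kc_gt0 : 0 < Kc.
Proof. by rewrite /Kc ltr_pwDr// sumr_ge0// => i _; exact: Kp_ge0. Qed.

Lemma Kp_le t : (t <= alpha)%N -> Kp ((Bp R alpha.+1)^`(t)) <= Kc.
Proof.
move=> ta; have ht : (t < alpha.+1)%N by rewrite ltnS.
rewrite /Kc (bigD1 (Ordinal ht))//= -addrA lerDl addr_ge0//.
by rewrite sumr_ge0// => i _; exact: Kp_ge0.
Qed.

Lemma gg_bound t x : (t <= alpha)%N -> `|gg alpha d t x| <= (d^-1)^+t * Kc.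
Proof.
move=> ta; rewrite /gg Pt_horner normrM normrX.
have di : 0 <= d^-1 by rewrite invr_ge0 ltW.
rewrite (ger0_norm di) ler_wpM2l ?exprn_ge0//.
apply: le_trans (Kp_le ta); apply: Kp_bound.
have /andP[c0 cd] := cl_range x (ltW d0).
rewrite ger0_norm ?mulr_ge0// mulrC ler_pdivrMr// mul1r. exact: cd.
Qed.

Lemma gg0_eq x : gg alpha d 0 x = (d^-1 * cl d x * (1 - d^-1 * cl d x)) ^+ alpha.+1.
Proof. by rewrite /gg Pt_horner expr0 mul1r derivn0 Bp_horner. Qed.

Lemma gg0_ge0 x : 0 <= gg alpha d 0 x.
Proof.
rewrite gg0_eq exprn_ge0//.
have /andP[c0 cd] := cl_range x (ltW d0).
have y0 : 0 <= d^-1 * cl d x by rewrite mulr_ge0// invr_ge0 ltW.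
have y1 : d^-1 * cl d x <= 1 by rewrite mulrC ler_pdivrMr// mul1r.
by rewrite mulr_ge0// subr_ge0.
Qed.

Definition c0 : R := (3 / 16) ^+ alpha.+1.

Lemma c0_gt0 : 0 < c0.
Proof. by rewrite /c0 exprn_gt0// divr_gt0. Qed.

Lemma gg0_lb x : d / 4 <= x <= 3 * d / 4 -> c0 <= gg alpha d 0 x.
Proof.
move=> /andP[h1 h2].
have x0 : 0 <= x by apply: le_trans h1; rewrite divr_ge0 ?ltW.
have xd : x <= d by apply: (le_trans h2); lra.
rewrite gg0_eq cl_id ?x0 ?xd// /c0.
apply: lerXn2r; rewrite ?nnegrE ?divr_ge0//.
  have y0 : 0 <= d^-1 * x by rewrite mulr_ge0// invr_ge0 ltW.
  have y1 : d^-1 * x <= 1 by rewrite mulrC ler_pdivrMr// mul1r.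
  by rewrite mulr_ge0// subr_ge0.
set y := d^-1 * x.
have hy1 : 1/4 <= y by rewrite /y [d^-1 * x]mulrC ler_pdivlMr//; lra.
have hy2 : y <= 3/4 by rewrite /y [d^-1 * x]mulrC ler_pdivrMr//; lra.
nra.
Qed.

End GG.

End ME.
Import ME.

Module MF.
Set Implicit Arguments. Unset Strict Implicit.
Import Order.TTheory GRing.Theory Num.Theory.
Import numFieldNormedType.Exports.
Local Open Scope classical_set_scope.
Local Open Scope ring_scope.

Section Fin.
Variable R : realType.

Lemma D_sq (d : R) (k : nat) : 0 < d ->
  (d `^ (k%:R + 2^-1)) ^+ 2 = d ^+ (k.*2.+1).
Proof.
move=> d0; rewrite -powR_mulrn ?powR_ge0// -powRrM.
have -> : (k%:R + 2^-1) * 2%:R = (k.*2.+1)%:R :> R.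
  rewrite mulrDl mulVf ?pnatr_eq0// -natrM muln2 -addn1 natrD//.
by rewrite powR_mulrn// ltW.
Qed.

Lemma ED_sq (d : R) (k : nat) : 0 < d ->
  ((d^-1) ^+ k) ^+ 2 * (d `^ (k%:R + 2^-1)) ^+ 2 = d.
Proof.
move=> d0; rewrite D_sq// -exprM exprS mulrCA -muln2 -exprMn mulVf ?gt_eqF//.
by rewrite expr1n mulr1.
Qed.

Lemma fin_ineq (a b2 d I S D E : R) : 0 <= a -> 0 < b2 -> 0 < S -> 0 <= D ->
  0 <= d -> a * d <= I -> S <= b2 * E ^+ 2 * d -> E ^+ 2 * D ^+ 2 = d ->
  a / Num.sqrt b2 * D <= I / Num.sqrt S.
Proof.
move=> a0 b0 S0 D0 d0 adI Sb ED.
have sS : 0 < Num.sqrt S by rewrite sqrtr_gt0.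
have sb : 0 < Num.sqrt b2 by rewrite sqrtr_gt0.
have I0 : 0 <= I by apply: le_trans adI; rewrite mulr_ge0.
rewrite ler_pdivlMr//.
suff H : (a / Num.sqrt b2 * D * Num.sqrt S) ^+ 2 <= I ^+ 2.
  have L0 : 0 <= a / Num.sqrt b2 * D * Num.sqrt S.
    by rewrite !mulr_ge0 ?invr_ge0 ?sqrtr_ge0.
  have := @ler_sqr R _ _ L0 I0; rewrite /= => <-; exact: H.
rewrite !exprMn exprVn !sqr_sqrtr; last 2 first; [exact: ltW|exact: ltW|].
have step1 : a ^+ 2 / b2 * D ^+ 2 * S <= a ^+ 2 / b2 * D ^+ 2 * (b2 * E ^+ 2 * d).
  apply: ler_wpM2l Sb.
  by rewrite mulr_ge0 ?divr_ge0 ?exprn_ge0 // ltW.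
apply: (le_trans step1).
have -> : a ^+ 2 / b2 * D ^+ 2 * (b2 * E ^+ 2 * d) = (a * d) ^+ 2.
  transitivity (a ^+ 2 * (E ^+ 2 * D ^+ 2) * d * (b2 / b2)); first ring.
  by rewrite ED divff ?gt_eqF// mulr1; ring.
by rewrite lerXn2r ?nnegrE ?mulr_ge0.
Qed.

End Fin.

End MF.
Import MF.

Module MG.
Set Implicit Arguments. Unset Strict Implicit.
Import Order.TTheory GRing.Theory Num.Theory.
Import numFieldNormedType.Exports.
Local Open Scope classical_set_scope.
Local Open Scope ring_scope.

Theorem part1 (R : realType) (alpha : nat) :
  exists C : R, 0 < C /\
  (forall (n : nat) (xi w : 'I_n -> R) (delta : R),
     0 < delta <= 1 ->
     (forall j : 'I_n, ~ (0 < xi j < delta)) ->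
     ((C * delta `^ (alpha%:R + 2^-1))%:E <= ewor alpha w xi)%E).
Proof.
pose K := Kc R alpha.
pose r0 : R := rho 0.
pose r1 : R := rho 1.
pose a := c0 R alpha * r1 / 2.
pose b2 := alpha.+1%:R * K ^+ 2 * r0.
have r0p : 0 < r0 := rho_gt0 0.
have r1p : 0 < r1 := rho_gt0 1.
have Kp0 : 0 < K := Kc_gt0 R alpha.
have c0p : 0 < c0 R alpha := c0_gt0 R alpha.
have a0 : 0 < a by rewrite /a divr_gt0// mulr_gt0.
have b0 : 0 < b2.
  by rewrite /b2 mulr_gt0// mulr_gt0 ?ltr0n// exprn_gt0.
exists (a / Num.sqrt b2); split; first by rewrite divr_gt0 ?sqrtr_gt0.
move=> n xi w d /andP[d0 d1] hxi.
pose g := gg alpha d.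
have m_def t : (t <= alpha)%N -> (t < alpha.+1)%N by move=> h; rewrite ltnS.
have cg t : continuous (g t) by exact: gg_cont.
have hout t x : (t <= alpha)%N -> ~ (0 <= x <= d) -> g t x = 0.
  by move=> ta hx; apply: gg_out => //; rewrite ltnS.
have ch t : continuous (fun x => g t x ^+ 2 * rho x).
  move=> x; apply: cvgM; last exact: rho_cont.
  apply: (@continuous_comp _ _ _ (g t) (fun y => y ^+ 2)); first exact: cg.
  exact: exprn_continuous.
have chv t : (t <= alpha)%N -> forall x, ~ (0 <= x <= d) -> g t x ^+ 2 * rho x = 0.
  by move=> ta x hx; rewrite hout// expr0n /= mul0r.
pose E := (d^-1) ^+ alpha.
have K0 : 0 <= K := ltW Kp0.
have e0 : 0 <= d^-1 by rewrite invr_ge0 ltW.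
have d1' : 1 <= d^-1 by rewrite invf_ge1.
have sq_le t : (t <= alpha)%N -> sqnormL2rho (g t) <= (E * K) ^+ 2 * r0 * d.
  move=> ta; rewrite /sqnormL2rho (int_supp d0 (ch t) (chv t ta)).2.
  apply: (le_trans (int_le_const (M := ((d^-1) ^+ t * K) ^+ 2 * r0) d0 (ch t) _)).
    move=> x _; apply: ler_pM; rewrite ?sqr_ge0 ?rho_le0//; first exact: ltW (rho_gt0 _).
    rewrite -[g t x ^+ 2]real_normK ?num_real//; apply: lerXn2r; rewrite ?nnegrE//.
      by rewrite mulr_ge0 ?exprn_ge0.
    exact: gg_bound.
  apply: ler_wpM2r; first exact: ltW.
  apply: ler_wpM2r; first exact: ltW.
  apply: lerXn2r; rewrite ?nnegrE ?mulr_ge0 ?exprn_ge0//.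
  apply: ler_wpM2r => //.
  exact: ler_weXn2l.
have sq_ge0 t : 0 <= sqnormL2rho (g t).
  by apply: Rintegral_ge0 => x _; rewrite mulr_ge0 ?sqr_ge0// ltW// rho_gt0.
have d40 : 0 <= d / 4 by rewrite divr_ge0// ltW.
have d4b : d / 4 <= 3 * d / 4 by lra.
have d4d : 3 * d / 4 <= d by lra.
have inab x : d / 4 <= x <= 3 * d / 4 -> `|x| <= 1.
  move=> /andP[h1 h2]; rewrite ger0_norm; last exact: le_trans h1.
  by apply: (le_trans h2); apply: (le_trans d4d).
have g0c x : d / 4 <= x <= 3 * d / 4 -> c0 R alpha <= g 0%N x.
  by move=> hx; exact: gg0_lb.
have g0p x : 0 <= g 0%N x by exact: gg0_ge0.
have sq0_lb : c0 R alpha ^+ 2 * r1 * (3 * d / 4 - d / 4) <= sqnormL2rho (g 0%N).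
  rewrite /sqnormL2rho (int_supp d0 (ch 0%N) (chv 0%N (leq0n _))).2.
  apply: (int_ge_const (a := d / 4) (b := 3 * d / 4) d0 (ch 0%N)) => //.
  - by rewrite mulr_ge0// ?exprn_ge0// ltW.
  - by move=> x _; rewrite mulr_ge0 ?sqr_ge0// ltW// rho_gt0.
  - move=> x hx; apply: ler_pM.
    + by rewrite exprn_ge0// ltW.
    + exact: ltW.
    + by apply: lerXn2r; rewrite ?nnegrE//; [exact: ltW|exact: g0c].
    + exact: rho_ge1 (inab x hx).
have cI : continuous (fun x => g 0%N x * rho x).
  by move=> x; apply: cvgM; [exact: cg|exact: rho_cont].
have vI : forall x, ~ (0 <= x <= d) -> g 0%N x * rho x = 0.
  by move=> x hx; rewrite hout// mul0r.
have I_lb : c0 R alpha * r1 * (3 * d / 4 - d / 4) <= Igauss (g 0%N).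
  rewrite /Igauss (int_supp d0 cI vI).2.
  apply: (int_ge_const (a := d / 4) (b := 3 * d / 4) d0 cI) => //.
  - by rewrite mulr_ge0// ltW.
  - by move=> x _; rewrite mulr_ge0// ltW// rho_gt0.
  - move=> x hx; apply: ler_pM.
    + exact: ltW.
    + exact: ltW.
    + exact: g0c.
    + exact: rho_ge1 (inab x hx).
have ad : a * d = c0 R alpha * r1 * (3 * d / 4 - d / 4) by rewrite /a; field.
have quad0 : quad w xi (g 0%N) = 0.
  rewrite /quad big1// => j _.
  suff -> : g 0%N (xi j) = 0 by rewrite mulr0.
  have hn := hxi j.
  case: (boolP (0 <= xi j <= d)) => [/andP[x0 xd]|hx]; last first.
    by apply: hout => // hh; move/negP: hx; apply.
  rewrite /g gg_in ?x0 ?xd//.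
  have [->|xne] := eqVneq (xi j) 0; first exact: Pt_root0.
  have xpos : 0 < xi j by rewrite lt_neqAle eq_sym xne x0.
  have xeq : xi j = d.
    apply/eqP; rewrite eq_le xd /=; rewrite leNgt; apply/negP => xl.
    by apply: hn; rewrite xpos xl.
  by rewrite xeq Pt_rootd// gt_eqF.
pose S := \sum_(0 <= tau < alpha.+1) sqnormL2rho (g tau).
have S_le : S <= b2 * E ^+ 2 * d.
  rewrite /S big_mkord.
  apply: (@le_trans _ _ (\sum_(i < alpha.+1) ((E * K) ^+ 2 * r0 * d))).
    by apply: ler_sum => i _; apply: sq_le; rewrite -ltnS.
  rewrite sumr_const card_ord /b2 -mulr_natl exprMn.
  by rewrite le_eqVlt; apply/orP; left; apply/eqP; ring.
have S_gt0 : 0 < S.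
  rewrite /S big_ltn//.
  apply: (@lt_le_trans _ _ (sqnormL2rho (g 0%N))).
    apply: lt_le_trans sq0_lb; apply: mulr_gt0; [apply: mulr_gt0; [exact: exprn_gt0|exact: r1p]|lra].
  by rewrite lerDl sumr_ge0// => i _; exact: sq_ge0.
have I0 : 0 <= Igauss (g 0%N).
  apply: le_trans I_lb; apply: mulr_ge0; [apply: mulr_ge0; exact: ltW|lra].
pose e := ((`|Igauss (g 0%N) - quad w xi (g 0%N)| / H_norm alpha g)%:E).
apply: (@le_trans _ _ e); last first.
  apply: ereal_sup_ubound; exists (g 0%N), g; split => //.
  - split; first exact: cg.
    split; first by [].
    split.
      move=> t ht; split; first exact: measurable_realfun.continuous_measurable_fun.
      have [ig _] := int_supp d0 (ch t) (chv t ht).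
      move/integrableP: ig => [mg ifin].
      apply: le_lt_trans ifin.
      apply: le_trans (lee_abs _) _.
      exact: le_abse_integral.
    by move=> t ht; exact: gg_weak.
  - move=> /(congr1 (fun F => F (d / 2))) h0.
    have : c0 R alpha <= g 0%N (d / 2) by apply: g0c; apply/andP; split; lra.
    by rewrite h0 leNgt c0p.
rewrite /e lee_fin quad0 subr0 ger0_norm// /H_norm -/S.
apply: (@fin_ineq R a b2 d _ S _ E).
- exact: ltW.
- exact: b0.
- exact: S_gt0.
- exact: powR_ge0.
- exact: ltW.
- by rewrite ad.
- exact: S_le.
- exact: ED_sq.
Qed.

End MG.
Import MG.

Unset Implicit Arguments. Set Strict Implicit.

Theorem corollary3p3 (R : realType) (alpha : nat) :
  exists C : R, 0 < C /\
  (forall (n : nat) (xi w : 'I_n -> R) (delta : R),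
     (forall i j : 'I_n, (i < j)%N -> xi i < xi j) ->
     0 < delta <= 1 ->
     (forall j : 'I_n, ~ (0 < xi j < delta)) ->
     ((C * delta `^ (alpha%:R + 2^-1))%:E <= ewor alpha w xi)%E) /\
  (forall (n : nat) (xi w : 'I_n -> R) (r : R),
     (1 <= n)%N -> 0 < r ->
     (forall i j : 'I_n, (i < j)%N -> xi i < xi j) ->
     (forall j : 'I_n, ~ (0 < xi j < n%:R `^ (- r))) ->
     ((C * n%:R `^ (- (r * alpha%:R) - r / 2))%:E <= ewor alpha w xi)%E).
Proof.
have [C [C0 H1]] := part1 R alpha.
exists C; split => //; split.
  by move=> n xi w delta _ hd hxi; exact: H1.
move=> n xi w r n1 r0 _ hxi.
have n1' : 1 <= n%:R :> R by rewrite ler1n.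
have np : 0 < n%:R :> R by apply: lt_le_trans n1'.
have dl0 : 0 < n%:R `^ (- r) :> R by exact: powR_gt0.
have dl1 : n%:R `^ (- r) <= 1 :> R.
  rewrite -[X in _ <= X](powRr0 (n%:R : R)); apply: (ler_powR n1').
  by rewrite oppr_le0 ltW.
have := H1 n xi w (n%:R `^ (- r)); rewrite dl0 dl1 => /(_ isT hxi).
rewrite -powRrM.
have -> : - r * (alpha%:R + 2^-1) = - (r * alpha%:R) - r / 2 by ring.
by [].
Qed.
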